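(* Consider the Harmonia state machine defined in the context below, with parameters a finite set $D$ of data items, an integer $N\ge 1$ (number of switches), a finite nonempty set $\mathit{Rep}$ of replicas, and a Boolean $\mathit{isReadBehind}$. Then in every state reachable from the initial state by a finite sequence of the actions listed below (with arbitrary choice of action and arguments at each step), the following invariant $\mathit{Linearizability}$ holds: for every message $m\in\mathit{messages}$ with $m.\mathit{mtype}=\mathrm{ReadResponse}$, (i) $m.\mathit{write}\succeq m.\mathit{ghost}$, and (ii) either $m.\mathit{write}=\bot$ or $m.\mathit{write}$ is an entry of $\mathit{CommittedLog}$. (Informally: Harmonia preserves linearizability of the underlying primary-backup/read-ahead or quorum/read-behind replication protocol, including across switch failovers.)
   Context: Harmonia is a replicated-storage scheme in which a network switch tracks a ''dirty set'' of objects with pending writes and routes reads of clean objects to a single replica. It is modeled as the following state machine. Writes. A write is a record $w=(\mathrm{Write}, \mathit{switchNum}, \mathit{seq}, \mathit{dataItem})$ with $\mathit{switchNum}\in\{1,\dots,N\}$, $\mathit{seq}\in\mathbb{N}_{\ge1}$, $\mathit{dataItem}\in D$. The special value $\bot$ has $\mathit{switchNum}=0,\ \mathit{seq}=0$ and no data item. Define $w_1\succeq w_2$ iff $w_1.\mathit{switchNum}>w_2.\mathit{switchNum}$, or $w_1.\mathit{switchNum}=w_2.\mathit{switchNum}$ and $w_1.\mathit{seq}\ge w_2.\mathit{seq}$; and $w_1\succ w_2$ iff $w_1.\mathit{switchNum}>w_2.\mathit{switchNum}$, or they are equal and $w_1.\mathit{seq}>w_2.\mathit{seq}$. For a finite nonempty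 set $W$ of writes (possibly including $\bot$), $\max W$ denotes an element $w\in W$ with $w\succeq w'$ for all $w'\in W$ (selected by a fixed deterministic choice function). State variables: $\mathit{messages}$ (a set of messages, initially empty); for each switch $s\in\{1,\dots,N\}$ a record $\mathit{sw}[s]$ with fields $\mathit{seq}\in\mathbb{N}$ (initially $0$), $\mathit{dirty}$ a finite partial function $D\rightharpoonup\mathbb{N}$ (initially empty domain), $\mathit{lastCommitted}$ a write or $\bot$ (initially $\bot$); $\mathit{active}\in\{1,\dots,N\}$ (initially $1$); $\mathit{log}$ a finite sequence of writes (initially empty); $\mathit{cp}:\mathit{Rep}\to\mathbb{N}$ (initially all $0$). Derived quantities: $\mathit{CommittedLog}=\mathit{log}$ if $\mathit{isReadBehind}$, and otherwise the prefix of $\mathit{log}$ of length $\min_{r\in\mathit{Rep}}\mathit{cp}[r]$. For a sequence $L$ of writes and $d\in D$, $\mathrm{MCW}(d,L)=\max(\{\bot\}\cup\{e \text{ entry of } L: e.\mathit{dataItem}=d\})$; $\mathrm{MCW}(d)=\mathrm{MCW}(d,\mathit{CommittedLog})$; $\mathrm{MCW}_{all}=\max(\{\bot\}\cup\{\text{entries of }\mathit{CommittedLog}\})$. Actions (each leaves unmentioned variables unchanged): 1. SendWrite$(s,d)$, $s\in\{1..N\}, d\in D$: enabled iff $s\le\mathit{active}$. Let $n=\mathit{sw}[s].\mathit{seq}+1$; set $\mathit{sw}[s].\mathit{seq}:=n$, set $\mathit{sw}[s].\mathit{dirty}(d):=n$ (adding or overriding), add the write $(\mathrm{Write},s,n,d)$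 to $\mathit{messages}$. 2. HandleWrite$(w)$ for a write $w\in\mathit{messages}$: enabled iff $\mathit{log}$ is empty or $w\succeq$ the last entry of $\mathit{log}$; appends $w$ to $\mathit{log}$. 3. ProcessWriteCompletion$(w)$ for $w$ an entry of $\mathit{log}$: enabled iff $\mathrm{MCW}_{all}\succeq w$. With $s=w.\mathit{switchNum}$: restrict $\mathit{sw}[s].\mathit{dirty}$ to those $d$ with $\mathit{sw}[s].\mathit{dirty}(d)>w.\mathit{seq}$, and set $\mathit{sw}[s].\mathit{lastCommitted}:=\max\{\mathit{sw}[s].\mathit{lastCommitted},w\}$. 4. CommitWrite$(r)$, $r\in\mathit{Rep}$: enabled iff $|\mathit{log}|>\mathit{cp}[r]$; sets $\mathit{cp}[r]:=\mathit{cp}[r]+1$. 5. SendRead$(s,d)$: let $\mathit{lr}=\max(\{\mathrm{MCW}(d)\}\cup\{m.\mathit{write}: m\in\mathit{messages},\ m.\mathit{mtype}=\mathrm{ReadResponse},\ m.\mathit{write}\ne\bot,\ m.\mathit{write}.\mathit{dataItem}=d\})$. If $d\notin\mathrm{dom}(\mathit{sw}[s].\mathit{dirty})$ and $\mathit{sw}[s].\mathit{lastCommitted}\succ\bot$, add message $(\mathrm{HarmoniaRead}, \mathit{dataItem}=d, \mathit{switchNum}=s, \mathit{lastCommitted}=\mathit{sw}[s].\mathit{lastCommitted}, \mathit{ghost}=\mathit{lr})$; otherwise add $(\mathrm{ProtocolRead},\mathit{dataItem}=d,\mathit{ghost}=\mathit{lr})$. 6. HandleProtocolRead$(m)$ for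 a ProtocolRead $m\in\mathit{messages}$: add $(\mathrm{ReadResponse}, \mathit{write}=\mathrm{MCW}(m.\mathit{dataItem}), \mathit{ghost}=m.\mathit{ghost})$. 7. HandleHarmoniaRead$(r,m)$ for $r\in\mathit{Rep}$ and a HarmoniaRead $m\in\mathit{messages}$: let $c=\mathit{cp}[r]$ and $w=\mathrm{MCW}(m.\mathit{dataItem}, \text{first } c \text{ entries of } \mathit{log})$. Enabled iff $m.\mathit{switchNum}=\mathit{active}$ and: if $\mathit{isReadBehind}$, then $(\mathit{log}[c]$ if $c>0$, else $\bot)\succeq m.\mathit{lastCommitted}$; if not $\mathit{isReadBehind}$ (read-ahead), then $m.\mathit{lastCommitted}\succeq w$. Adds $(\mathrm{ReadResponse},\mathit{write}=w,\mathit{ghost}=m.\mathit{ghost})$. 8. SwitchFailover: enabled iff $\mathit{active}<N$; sets $\mathit{active}:=\mathit{active}+1$. *)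

(* Defs.v *)
From mathcomp Require Import all_boot.
From Stdlib Require List.
Set Implicit Arguments. Unset Strict Implicit. Unset Printing Implicit Defensive.

Section Harmonia.
Variable D : finType.
Variable Rep : finType.
Variable r0 : Rep.         (* witness that Rep is nonempty *)
Variable N : nat.
Variable isReadBehind : bool.

(* A write is Some (switchNum, seq, dataItem); bot is None
   (switchNum 0, seq 0, no data item). *)
Definition write := option (nat * nat * D).
Definition bot : write := None.
Definition switchNum (w : write) : nat := if w is Some (s, _, _) then s else 0.
Definition wseq (w : write) : nat := if w is Some (_, n, _) then n else 0.
Definition dataItem (w : write) : option D := if w is Some (_, _, d) then Some d else None.

Definition wge (w1 w2 : write) : bool :=
  (switchNum w2 < switchNum w1) || ((switchNum w1 == switchNum w2) && (wseq w2 <= wseq w1)).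
Definition wgt (w1 w2 : write) : bool :=
  (switchNum w2 < switchNum w1) || ((switchNum w1 == switchNum w2) && (wseq w2 < wseq w1)).

(* The fixed deterministic choice function "max" on finite sets of writes
   (finite sets represented by sequences; the result only depends on the
   set of members). *)
Definition is_max_choice (mx : seq write -> write) : Prop :=
  [/\ forall s, s != [::] -> mx s \in s,
      forall s w, w \in s -> wge (mx s) w
    & forall s1 s2, s1 =i s2 -> mx s1 = mx s2].

Variable mx : seq write -> write.

Inductive msg :=
| MWrite of write
| ReadResponse of write & write                     (* write, ghost *)
| HarmoniaRead of D & nat & write & write           (* dataItem, switchNum, lastCommitted, ghost *)
| ProtocolRead of D & write.                        (* dataItem, ghost *)

Record swrec := SwRec {
  sw_seq : nat;
  sw_dirty : D -> option nat;   (* finite partial function D -> nat *)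
  sw_lastCommitted : write }.

Record state := State {
  messages : seq msg;            (* set of messages (duplicates irrelevant) *)
  sw : nat -> swrec;             (* only switches 1..N are meaningful *)
  active : nat;
  log : seq write;
  cp : Rep -> nat }.

Definition init_state : state :=
  State [::] (fun _ => SwRec 0 (fun _ => None) bot) 1 [::] (fun _ => 0).

Definition inMsgs (m : msg) (st : state) : Prop := List.In m (messages st).

Definition minCp (st : state) : nat := cp st [arg min_(r < r0) cp st r].

Definition CommittedLog (st : state) : seq write :=
  if isReadBehind then log st else take (minCp st) (log st).

Definition MCWL (d : D) (L : seq write) : write :=
  mx (bot :: [seq e <- L | dataItem e == Some d]).
Definition MCW (st : state) (d : D) : write := MCWL d (CommittedLog st).
Definition MCW_all (st : state) : write := mx (bot :: CommittedLog st).

Definition upd_sw (f : nat -> swrec) (s : nat) (r : swrec) : nat -> swrec :=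
  fun t => if t == s then r else f t.

Definition add_msg (st : state) (m : msg) : state :=
  State (m :: messages st) (sw st) (active st) (log st) (cp st).

Definition rr_writes (st : state) (d : D) : seq write :=
  pmap (fun m => match m with
                 | ReadResponse w _ => if (w != bot) && (dataItem w == Some d)
                                       then Some w else None
                 | _ => None end) (messages st).

Inductive step : state -> state -> Prop :=
| SendWrite st s d :
    1 <= s -> s <= N -> s <= active st ->
    let n := (sw_seq (sw st s)).+1 in
    let r := SwRec n (fun d' => if d' == d then Some n else sw_dirty (sw st s) d')
                   (sw_lastCommitted (sw st s)) in
    step st (State (MWrite (Some (s, n, d)) :: messages st) (upd_sw (sw st) s r)
                   (active st) (log st) (cp st))
| HandleWrite st w :
    inMsgs (MWrite w) st ->
    (log st = [::] \/ wge w (last bot (log st))) ->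
    step st (State (messages st) (sw st) (active st) (rcons (log st) w) (cp st))
| ProcessWriteCompletion st w :
    w \in log st ->
    wge (MCW_all st) w ->
    let s := switchNum w in
    let r := SwRec (sw_seq (sw st s))
                   (fun d => match sw_dirty (sw st s) d with
                             | Some k => if wseq w < k then Some k else None
                             | None => None end)
                   (mx [:: sw_lastCommitted (sw st s); w]) in
    step st (State (messages st) (upd_sw (sw st) s r) (active st) (log st) (cp st))
| CommitWrite st r :
    cp st r < size (log st) ->
    step st (State (messages st) (sw st) (active st) (log st)
                   (fun r' => if r' == r then (cp st r).+1 else cp st r'))
| SendRead st s d :
    1 <= s -> s <= N ->
    let lr := mx (MCW st d :: rr_writes st d) in
    let lc := sw_lastCommitted (sw st s) in
    step st (add_msg st
               (if (sw_dirty (sw st s) d == None) && wgt lc bot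
                then HarmoniaRead d s lc lr
                else ProtocolRead d lr))
| HandleProtocolRead st d g :
    inMsgs (ProtocolRead d g) st ->
    step st (add_msg st (ReadResponse (MCW st d) g))
| HandleHarmoniaRead st r d s lc g :
    inMsgs (HarmoniaRead d s lc g) st ->
    let c := cp st r in
    let w := MCWL d (take c (log st)) in
    s = active st ->
    (if isReadBehind
     then wge (if 0 < c then nth bot (log st) c.-1 else bot) lc
     else wge lc w) ->
    step st (add_msg st (ReadResponse w g))
| SwitchFailover st :
    active st < N ->
    step st (State (messages st) (sw st) (active st).+1 (log st) (cp st)).

Inductive reachable : state -> Prop :=
| reach_init : reachable init_state
| reach_step st st' : reachable st -> step st st' -> reachable st'.

Definition Linearizability (st : state) : Prop :=
  forall w g, inMsgs (ReadResponse w g) st ->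
    wge w g /\ (w = bot \/ w \in CommittedLog st).

End Harmonia.

(* Main.v *)
Require Import Defs.
From mathcomp Require Import all_boot zify.
Set Implicit Arguments. Unset Strict Implicit. Unset Printing Implicit Defensive.
Local Notation bot := (@Defs.bot _).

Lemma wge_refl (D : finType) (a : write D) : wge a a.
Proof. rewrite /wge; apply/orP; right; by rewrite eqxx leqnn. Qed.

Lemma wge_bot (D : finType) (a : write D) : wge a bot.
Proof. rewrite /wge /=; apply/orP; case: (switchNum a) => [|k]; [right|left] => //. Qed.

Lemma wge_trans (D : finType) (a b c : write D) : wge a b -> wge b c -> wge a c.
Proof.
rewrite /wge => /orP [H1|/andP [/eqP H1 H2]] /orP [H3|/andP [/eqP H3 H4]]; apply/orP.
- left; lia.
- left; lia.
- left; lia.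
- right; apply/andP; split; [apply/eqP; lia| lia].
Qed.

Lemma wge_total (D : finType) (a b : write D) : wge a b || wge b a.
Proof.
rewrite /wge; case: (ltngtP (switchNum b) (switchNum a)) => H /=.
all: try by [].
by rewrite leq_total.
Qed.

Lemma wge_antisym (D : finType) (a b : write D) : wge a b -> wge b a ->
  switchNum a = switchNum b /\ wseq a = wseq b.
Proof.
rewrite /wge => /orP [H1|/andP [/eqP H1 H2]] /orP [H3|/andP [/eqP H3 H4]]; lia.
Qed.

Lemma wgt_wge_bot (D : finType) (a : write D) : wgt a bot -> wge bot a -> False.
Proof. case: a => [[[s n] d]|] //=; rewrite /wgt /wge /=; case: s => [|s] //= H1 H2; lia. Qed.

Lemma wgt_bot_neq (D : finType) (a : write D) : wgt a bot -> a <> bot.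
Proof. by move=> H E; move: H; rewrite E. Qed.

Lemma wge_bot_sw (D : finType) (a : write D) : wge bot a -> switchNum a = 0.
Proof. case: a => [[[s n] d]|] //=; rewrite /wge /=; case: s => [|s] //=. Qed.

Lemma mx_in (D : finType) (mx : seq (write D) -> write D) s :
  is_max_choice mx -> mx (bot :: s) \in bot :: s.
Proof. by case=> H _ _; apply: H. Qed.

Lemma mx_ge (D : finType) (mx : seq (write D) -> write D) s w :
  is_max_choice mx -> w \in s -> wge (mx s) w.
Proof. by case=> _ H _; apply: H. Qed.

Lemma mx2 (D : finType) (mx : seq (write D) -> write D) a b :
  is_max_choice mx -> mx [:: a; b] = a \/ mx [:: a; b] = b.
Proof. case=> H _ _; have := H [:: a; b] isT; rewrite !inE => /orP [] /eqP; tauto. Qed.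

Lemma MCWL_spec (D : finType) (mx : seq (write D) -> write D) d L :
  is_max_choice mx -> MCWL mx d L = bot \/ (MCWL mx d L \in L /\ dataItem (MCWL mx d L) = Some d).
Proof.
move=> Hm; have := @mx_in _ _ [seq e <- L | dataItem e == Some d] Hm.
rewrite /MCWL in_cons => /orP [/eqP ->|]; first by left.
by rewrite mem_filter => /andP [/eqP H1 H2]; right.
Qed.

Lemma MCWL_ge (D : finType) (mx : seq (write D) -> write D) d L w :
  is_max_choice mx -> w \in L -> dataItem w = Some d -> wge (MCWL mx d L) w.
Proof.
move=> Hm HL Hd; rewrite /MCWL; apply: (mx_ge Hm); rewrite in_cons mem_filter HL Hd eqxx.
by rewrite orbT.
Qed.

Lemma take_closed (D : finType) (L : seq (write D)) k x y :
  pairwise (fun a b => wge b a) L ->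
  (forall a b, a \in L -> b \in L -> wge a b -> wge b a -> a = b) ->
  x \in take k L -> y \in L -> wge x y -> y \in take k L.
Proof.
move=> HP HU Hx Hy Hxy.
move: HP Hy; rewrite -{1 2}(cat_take_drop k L) pairwise_cat mem_cat.
case/and3P => /allrelP Har _ _ /orP [//|Hyd].
have Hyx := Har _ _ Hx Hyd.
have Hxl : x \in L by apply: mem_take Hx.
have Hyl : y \in L by apply: mem_drop Hyd.
by rewrite -(HU _ _ Hxl Hyl Hxy Hyx).
Qed.

Lemma take_mono (D : finType) (L e : seq (write D)) k k' w :
  k <= k' -> w \in take k L -> w \in take k' (L ++ e).
Proof.
move=> Hk Hw.
have H1 : w \in take k (L ++ e).
  rewrite take_cat; case: ltnP => H //.
  by rewrite mem_cat; apply/orP; left; move: Hw; rewrite take_oversize // ltnW.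
move: H1; rewrite -(take_takel _ Hk); exact: mem_take.
Qed.

Lemma minCp_le (D Rep : finType) (r0 : Rep) (st : state D Rep) r : minCp r0 st <= cp st r.
Proof. rewrite /minCp; case: arg_minnP => // i _ H; exact: H. Qed.

Definition grows (D Rep : finType) (st st' : state D Rep) :=
  (exists e, log st' = log st ++ e) /\ (forall r, cp st r <= cp st' r).

Lemma minCp_mono (D Rep : finType) (r0 : Rep) (st st' : state D Rep) :
  (forall r, cp st r <= cp st' r) -> minCp r0 st <= minCp r0 st'.
Proof.
move=> H; rewrite {2}/minCp.
exact: leq_trans (minCp_le r0 st [arg min_(r < r0) cp st' r]) (H _).
Qed.

Lemma CL_mono (D Rep : finType) (r0 : Rep) b (st st' : state D Rep) w :
  grows st st' -> w \in CommittedLog r0 b st -> w \in CommittedLog r0 b st'.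
Proof.
rewrite /CommittedLog => -[[e He] Hc]; case: b.
- by rewrite He mem_cat => ->.
- rewrite He; apply: take_mono; exact: minCp_mono.
Qed.

Lemma CL_sub (D Rep : finType) (r0 : Rep) b (st : state D Rep) w :
  w \in CommittedLog r0 b st -> w \in log st.
Proof. rewrite /CommittedLog; case: b => //; exact: mem_take. Qed.

Definition ghostOK (D Rep : finType) (r0 : Rep) b (st : state D Rep) d (g : write D) :=
  g = bot \/ (g \in CommittedLog r0 b st /\ dataItem g = Some d).

Definition msgOK (D Rep : finType) (r0 : Rep) b (st : state D Rep) (m : msg D) : Prop :=
  match m with
  | MWrite _ => True
  | ReadResponse w g => wge w g /\ (w = bot \/ w \in CommittedLog r0 b st)
  | ProtocolRead d g => ghostOK r0 b st d g
  | HarmoniaRead d s lc g =>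
      [/\ wgt lc bot, lc \in CommittedLog r0 b st, ghostOK r0 b st d g
        & active st <= s -> wge lc g]
  end.

Lemma ghostOK_mono (D Rep : finType) (r0 : Rep) b (st st' : state D Rep) d g :
  grows st st' -> ghostOK r0 b st d g -> ghostOK r0 b st' d g.
Proof. move=> Hg [->|[H1 H2]]; [by left|right; split=> //; exact: CL_mono Hg H1]. Qed.

Lemma msgOK_mono (D Rep : finType) (r0 : Rep) b (st st' : state D Rep) m :
  grows st st' -> active st <= active st' -> msgOK r0 b st m -> msgOK r0 b st' m.
Proof.
move=> Hg Ha; case: m => //=.
- move=> w g [H1 [H2|H2]]; split=> //; [by left|right; exact: CL_mono Hg H2].
- move=> d s lc g [H1 H2 H3 H4]; split=> //.
  + exact: CL_mono Hg H2.
  + exact: ghostOK_mono Hg H3.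
  + move=> Hs; apply: H4; exact: leq_trans Ha Hs.
- move=> d g; exact: ghostOK_mono.
Qed.

Record Inv (D Rep : finType) (r0 : Rep) (b : bool) (st : state D Rep) : Prop := {
  i_log : forall w, w \in log st -> inMsgs (MWrite w) st;
  i_wf : forall w, inMsgs (MWrite w) st -> exists s n d,
      [/\ w = Some (s, n, d), 0 < s, s <= active st & n <= sw_seq (sw st s)];
  i_uniq : forall s n d d', inMsgs (MWrite (Some (s, n, d))) st ->
      inMsgs (MWrite (Some (s, n, d'))) st -> d = d';
  i_dirty : forall s n d, inMsgs (MWrite (Some (s, n, d))) st ->
      match sw_dirty (sw st s) d with
      | Some k => n <= k
      | None => n <= wseq (sw_lastCommitted (sw st s)) end;
  i_lc : forall s, sw_lastCommitted (sw st s) = bot \/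
      (switchNum (sw_lastCommitted (sw st s)) = s /\
       sw_lastCommitted (sw st s) \in CommittedLog r0 b st);
  i_sorted : pairwise (fun a b => wge b a) (log st);
  i_cp : forall r, cp st r <= size (log st);
  i_msgs : forall m, inMsgs m st -> msgOK r0 b st m }.

Lemma inv_unique (D Rep : finType) (r0 : Rep) b (st : state D Rep) :
  Inv r0 b st -> forall a c, a \in log st -> c \in log st -> wge a c -> wge c a -> a = c.
Proof.
move=> I a c Ha Hc.
have [s [n [d [Ea _ _ _]]]] := i_wf I (i_log I Ha).
have [s' [n' [d' [Ec _ _ _]]]] := i_wf I (i_log I Hc).
subst a c => H1 H2.
have [E1 E2] := wge_antisym H1 H2; rewrite /= in E1 E2; subst s' n'.
by rewrite (i_uniq I (i_log I Ha) (i_log I Hc)).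
Qed.

Lemma log_sw (D Rep : finType) (r0 : Rep) b (st : state D Rep) w :
  Inv r0 b st -> w \in log st -> 0 < switchNum w.
Proof. move=> I Hw; by have [s [n [d [-> H _ _]]]] := i_wf I (i_log I Hw). Qed.

Lemma inv_init (D Rep : finType) (r0 : Rep) b : Inv r0 b (init_state D Rep).
Proof.
split=> //=; by move=> s; left.
Qed.

Lemma CL_same (D Rep : finType) (r0 : Rep) b (st st' : state D Rep) :
  log st' = log st -> cp st' = cp st -> CommittedLog r0 b st' = CommittedLog r0 b st.
Proof. by case: st => m s a l c; case: st' => m' s' a' l' c' /= -> ->. Qed.

Lemma grows_same (D Rep : finType) (st st' : state D Rep) :
  log st' = log st -> cp st' = cp st -> grows st st'.
Proof. rewrite /grows => -> ->; split=> //; exists [::]; by rewrite cats0. Qed.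


Lemma CL_State (D Rep : finType) (r0 : Rep) b (st : state D Rep) m s a :
  CommittedLog r0 b (State m s a (log st) (cp st)) = CommittedLog r0 b st.
Proof. by apply: CL_same. Qed.

Lemma wge_same_sw (D : finType) (a c : write D) :
  switchNum a = switchNum c -> wge a c -> wseq c <= wseq a.
Proof. rewrite /wge => E /orP [H|/andP [_ H]] //; lia. Qed.

Lemma last_ge (D : finType) (s : seq (write D)) y x :
  pairwise (fun a b => wge b a) s -> x \in s -> wge (last y s) x.
Proof.
elim: s y => [//|a s IH] y /=; rewrite in_cons => /andP [Ha Hp] /orP [/eqP ->|Hx].
- have := mem_last a s; rewrite in_cons => /orP [/eqP ->|H]; first exact: wge_refl.
  exact: (allP Ha).
- exact: IH.
Qed.

Lemma inv_add (D Rep : finType) (r0 : Rep) b (st : state D Rep) m :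
  Inv r0 b st -> msgOK r0 b st m -> (forall w, m <> MWrite w) -> Inv r0 b (add_msg st m).
Proof.
move=> I Hm Hnw.
have Hg : grows st (add_msg st m) by apply: grows_same.
have HCL : CommittedLog r0 b (add_msg st m) = CommittedLog r0 b st by apply: CL_same.
split.
- move=> w Hw; right; exact: (i_log I Hw).
- move=> w [E|H]; [by case: (Hnw w)|exact: (i_wf I H)].
- move=> s n d d' [E|H] [E'|H']; try by case: (Hnw _ E) || case: (Hnw _ E').
  exact: (i_uniq I H H').
- move=> s n d [E|H]; [by case: (Hnw _ E)|exact: (i_dirty I H)].
- move=> s; rewrite HCL; exact: (i_lc I s).
- exact: (i_sorted I).
- exact: (i_cp I).
- move=> m' [<-|H].
  + exact: (msgOK_mono Hg (leqnn _) Hm).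
  + exact: (msgOK_mono Hg (leqnn _) (i_msgs I H)).
Qed.

Lemma rr_spec (D Rep : finType) (st : state D Rep) d x :
  x \in rr_writes st d ->
  exists g, [/\ inMsgs (ReadResponse x g) st, x <> bot & dataItem x = Some d].
Proof.
rewrite /rr_writes /inMsgs; elim: (messages st) => [//|m l IH] /=.
case: m => [w|w g|d1 s lc g|d1 g] /=; try by move=> H; have [g' [H1 H2 H3]] := IH H; exists g'; split=> //; right.
case: ifP => [/andP [Hb /eqP Hd]|_] /=; last by move=> H; have [g' [H1 H2 H3]] := IH H; exists g'; split=> //; right.
rewrite in_cons => /orP [/eqP ->|H].
- exists g; split=> //; [by left| by apply/eqP].
- by have [g' [H1 H2 H3]] := IH H; exists g'; split=> //; right.
Qed.

Lemma pres (D Rep : finType) (r0 : Rep) N b mx (st st' : state D Rep) :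
  is_max_choice mx -> Inv r0 b st -> step r0 N b mx st st' -> Inv r0 b st'.
Proof.
move=> Hm I Hs; case: Hs I => {st st'}.
- move=> st s d H1 H2 H3 n r I.
  set st' := State _ _ _ _ _.
  have Hg : grows st st' by apply: grows_same.
  have HCL : CommittedLog r0 b st' = CommittedLog r0 b st by apply: CL_same.
  have Hold : forall s' n' d', inMsgs (MWrite (Some (s', n', d'))) st -> s' = s -> n' < n.
    move=> s' n' d' Hw Es; have [s1 [n1 [d1 [[E1 E2 E3] _ _ Hn]]]] := i_wf I Hw.
    by subst; rewrite /n ltnS.
  split.
  + move=> w Hw; rewrite /inMsgs /=; right; exact: (i_log I (Hw : w \in log st)).
  + move=> w; rewrite /inMsgs /= => -[E|Hw].
    * case: E => <-; exists s, n, d; split=> //.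
      by rewrite /= /upd_sw eqxx.
    * have [s1 [n1 [d1 [E1 E2 E3 E4]]]] := i_wf I Hw.
      exists s1, n1, d1; split=> //=; rewrite /upd_sw.
      case: eqP => [Es|_] /=; last exact: E4.
      subst s1; rewrite /n; exact: leq_trans E4 (leqnSn _).
  + move=> s1 n1 d1 d2; rewrite /inMsgs /= => -[E1|K1] [E2|K2].
    * by case: E1 E2 => _ _ <- [_ _ <-].
    * case: E1 => Es En Ed; have := Hold _ _ _ (K2 : inMsgs _ st) (esym Es); by rewrite -En ltnn.
    * case: E2 => Es En Ed; have := Hold _ _ _ (K1 : inMsgs _ st) (esym Es); by rewrite -En ltnn.
    * exact (i_uniq I K1 K2).
  + move=> s1 n1 d1; rewrite /inMsgs /= => -[E|H].
    * by case: E => <- <- <-; rewrite /upd_sw (eqxx s) /= (eqxx d).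
    * move: (i_dirty I (H : inMsgs _ st)) => Hd; rewrite /upd_sw; case: eqP => [Es|_]; last exact: Hd.
      subst s1 => /=; case: eqP => [Ed|_]; last exact: Hd.
      subst d1; exact: ltnW (Hold _ _ _ (H : inMsgs _ st) erefl).
  + move=> s1; rewrite HCL /= /upd_sw; case: eqP => [->|_] /=; exact: i_lc I _.
  + exact: i_sorted I.
  + exact: i_cp I.
  + move=> m; rewrite /inMsgs /= => -[<-|H] //.
    exact: (msgOK_mono Hg (leqnn _) (i_msgs I (H : inMsgs _ st))).
-
  move=> st w Hw Hlast I.
  have Hg : grows st (State (messages st) (sw st) (active st) (rcons (log st) w) (cp st)).
    by split=> //=; exists [:: w]; rewrite cats1.
  split=> /=.
  + move=> w'; rewrite mem_rcons in_cons => /orP [/eqP ->|H]; [exact: Hw|exact: (i_log I H)].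
  + exact: (i_wf I).
  + exact: (i_uniq I).
  + exact: (i_dirty I).
  + move=> s; case: (i_lc I s) => [->|[K1 K2]]; [by left|right; split=> //].
    exact: (CL_mono Hg K2).
  + rewrite pairwise_rcons (i_sorted I) andbT; apply/allP => x Hx.
    case: Hlast => [E|Hl]; first by rewrite E in Hx.
    exact: wge_trans Hl (last_ge _ (i_sorted I) Hx).
  + move=> r; rewrite size_rcons; exact: leq_trans (i_cp I r) (leqnSn _).
  + move=> m H; exact: (msgOK_mono Hg (leqnn _) (i_msgs I H)).
-
  move=> st w Hw Hge s r I.
  have Hs0 : 0 < s := log_sw I Hw.
  have Hwc : w \in CommittedLog r0 b st.
    have := @mx_in _ mx (CommittedLog r0 b st) Hm; rewrite in_cons => /orP [/eqP E|Hx].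
    - rewrite /MCW_all E in Hge; have E0 := wge_bot_sw Hge.
      by rewrite /s E0 in Hs0.
    - move: Hge Hx; rewrite /MCW_all /CommittedLog; case: b I => I Hge Hx //.
      exact: take_closed (i_sorted I) (inv_unique I) Hx Hw Hge.
  have Elc : sw_lastCommitted (sw st s) = bot \/
     (switchNum (sw_lastCommitted (sw st s)) = s /\
      sw_lastCommitted (sw st s) \in CommittedLog r0 b st) := i_lc I s.
  have Hlc'w : wge (mx [:: sw_lastCommitted (sw st s); w]) w.
    by apply: (mx_ge Hm); rewrite !inE eqxx orbT.
  have Hlc'lc : wge (mx [:: sw_lastCommitted (sw st s); w]) (sw_lastCommitted (sw st s)).
    by apply: (mx_ge Hm); rewrite !inE eqxx.
  have Hsw' : switchNum (mx [:: sw_lastCommitted (sw st s); w]) = s.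
    case: (mx2 (sw_lastCommitted (sw st s)) w Hm) => E; rewrite E //.
    case: Elc => [E0|[K _]]; last exact: K.
    rewrite E E0 in Hlc'w; have E1 := wge_bot_sw Hlc'w.
    by rewrite /s E1 in Hs0.
  have Hseqw : wseq w <= wseq (mx [:: sw_lastCommitted (sw st s); w]).
    exact: wge_same_sw Hsw' Hlc'w.
  have Hseqlc : wseq (sw_lastCommitted (sw st s)) <= wseq (mx [:: sw_lastCommitted (sw st s); w]).
    case: Elc => [->//|[K _]]; apply: wge_same_sw Hlc'lc; by rewrite K.
  split=> /=.
  + exact: (i_log I).
  + move=> w' H; have [s1 [n1 [d1 [K1 K2 K3 K4]]]] := i_wf I H.
    exists s1, n1, d1; split=> //; rewrite /upd_sw; case: eqP => [Es|_] //.
    by rewrite /= -Es.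
  + exact: (i_uniq I).
  + move=> s1 n1 d1 H; have Hd := i_dirty I H.
    rewrite /upd_sw; case: eqP => [Es|_]; last exact: Hd.
    rewrite Es in Hd; move: Hd => /=.
    case: (sw_dirty (sw st s) d1) => [k|] /=.
    * case: ifP => Hwk Hk /=; first exact: Hk.
      move/negbT: Hwk; rewrite -leqNgt => Hwk.
      exact: leq_trans Hk (leq_trans Hwk Hseqw).
    * move=> Hk; exact: leq_trans Hk Hseqlc.
  + move=> s1; rewrite CL_State /upd_sw; case: eqP => [Es|_] /=; last exact: (i_lc I s1).
    right; split; first by rewrite Hsw' Es.
    case: (mx2 (sw_lastCommitted (sw st s)) w Hm) => E; rewrite E //.
    case: Elc => [E0|[_ K]]; last exact: K.
    by move: Hsw'; rewrite E E0 => E1; rewrite -E1 in Hs0.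
  + exact: (i_sorted I).
  + exact: (i_cp I).
  + move=> m H; exact: (msgOK_mono (grows_same _ _) (leqnn _) (i_msgs I H)).
-
  move=> st r Hr I.
  have Hg : grows st (State (messages st) (sw st) (active st) (log st)
                   (fun r' => if r' == r then (cp st r).+1 else cp st r')).
    split=> /=; first by exists [::]; rewrite cats0.
    by move=> r' /=; case: eqP => [->|_] //; rewrite leqnSn.
  split=> /=.
  + exact: (i_log I).
  + exact: (i_wf I).
  + exact: (i_uniq I).
  + exact: (i_dirty I).
  + move=> s; case: (i_lc I s) => [->|[K1 K2]]; [by left|right; split=> //].
    exact: (CL_mono Hg K2).
  + exact: (i_sorted I).
  + by move=> r' /=; case: eqP => [_|_]; [exact: Hr|exact: (i_cp I)].
  + move=> m H; exact: (msgOK_mono Hg (leqnn _) (i_msgs I H)).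
-
  move=> st s d H1 H2 lr lc I.
  have Elr : lr = mx (MCW r0 b mx st d :: rr_writes st d) by [].
  clearbody lr.
  have Hgh : ghostOK r0 b st d lr.
    have Hlr : lr = MCW r0 b mx st d \/ lr \in rr_writes st d.
      case: Hm => K _ _; have := K (MCW r0 b mx st d :: rr_writes st d) isT; rewrite -Elr.
      by rewrite in_cons => /orP [/eqP ->|->]; [left|right].
    case: Hlr => [->|Hr].
    - rewrite /MCW; case: (@MCWL_spec _ mx d (CommittedLog r0 b st) Hm) => [->|[K1 K2]];
        [by left|by right].
    - have [g [K1 K2 K3]] := rr_spec Hr.
      have := i_msgs I K1 => /= -[_ [E|K4]]; first by case: K2.
      by right.
  apply: (inv_add I); last by move=> w; case: ifP.
  case: ifP => [/andP [/eqP Hdn Hlc]|_] /=; last exact: Hgh.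
  have [Elc|[Hsw HlcCL]] := i_lc I s.
    by case: (wgt_bot_neq Hlc Elc).
  split=> // Has.
  case: Hgh => [->|[K1 K2]]; first exact: wge_bot.
  have Hmsg := i_log I (CL_sub K1).
  have [s1 [n1 [d1 [E1 E2 E3 E4]]]] := i_wf I Hmsg.
  rewrite E1 in K2 Hmsg *; case: K2 => Ed; subst d1.
  have Hd := i_dirty I Hmsg.
  rewrite /wge Hsw /=.
  have : s1 <= s by exact: leq_trans E3 Has.
  rewrite leq_eqVlt => /orP [/eqP Es|->] //.
  subst s1; rewrite ltnn eqxx /=; rewrite Hdn in Hd; exact: Hd.
-
  move=> st d g Hin I; apply: inv_add => //=.
  have := i_msgs I Hin => /= Hgh; split.
  + case: Hgh => [->|[K1 K2]]; [exact: wge_bot|exact: (MCWL_ge Hm K1 K2)].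
  + case: (@MCWL_spec _ mx d (CommittedLog r0 b st) Hm) => [E|[K1 _]];
      [by left|by right].
-
  move=> st r d s lc g Hin c w Hs Hcond I.
  apply: (inv_add I) => //=.
  have := i_msgs I Hin => /= -[Hgt Hlc Hgh Hact].
  have Hlg : wge lc g by apply: Hact; rewrite Hs.
  have HCLe : CommittedLog r0 b st = if b then log st else take (minCp r0 st) (log st) by [].
  move: Hcond; case Hb: b => Hcond; rewrite /ghostOK HCLe Hb in Hlc Hgh; rewrite /CommittedLog /=.
  + have Hc : c <= size (log st) := i_cp I r.
    move: Hcond; case Hc0: (0 < c) => Hcond; last by case: (wgt_wge_bot Hgt Hcond).
    have Hc1 : c.-1 < c by rewrite ltn_predL.
    have Hx : nth bot (log st) c.-1 \in take c (log st).
      rewrite -(nth_take bot Hc1); apply: mem_nth; by rewrite size_takel.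
    split.
    * case: Hgh => [->|[K1 K2]]; first exact: wge_bot.
      have Hg' := take_closed (i_sorted I) (inv_unique I) Hx K1 (wge_trans Hcond Hlg).
      exact: (MCWL_ge Hm Hg' K2).
    * case: (@MCWL_spec _ mx d (take c (log st)) Hm) => [E|[K1 _]]; [by left|right].
      exact: mem_take K1.
  + split.
    * case: Hgh => [->|[K1 K2]]; first exact: wge_bot.
      apply: (MCWL_ge Hm _ K2).
      have := take_mono [::] (minCp_le r0 st r) K1; by rewrite cats0.
    * case: (@MCWL_spec _ mx d (take c (log st)) Hm) => [E|[K1 _]]; [by left|right].
      exact: take_closed (i_sorted I) (inv_unique I) Hlc (mem_take K1) Hcond.
-
  move=> st Ha I.
  have Hg : grows st (State (messages st) (sw st) (active st).+1 (log st) (cp st)).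
    by apply: grows_same.
  split=> /=.
  + exact: (i_log I).
  + move=> w H; have [s [n [d [K1 K2 K3 K4]]]] := i_wf I H.
    exists s, n, d; split=> //; exact: leq_trans K3 (leqnSn _).
  + exact: (i_uniq I).
  + exact: (i_dirty I).
  + exact: (i_lc I).
  + exact: (i_sorted I).
  + exact: (i_cp I).
  + move=> m H; exact: (msgOK_mono Hg (leqnSn _) (i_msgs I H)).
Qed.

Theorem theorem1 (D Rep : finType) (r0 : Rep) (N : nat) (isReadBehind : bool)
    (mx : seq (write D) -> write D) :
  1 <= N ->
  is_max_choice mx ->
  forall st : state D Rep,
    reachable r0 N isReadBehind mx st ->
    Linearizability r0 isReadBehind st.
Proof.
move=> _ Hm st Hr.
have I : Inv r0 isReadBehind st.
  elim: Hr => [|st1 st2 _ IH Hs]; first exact: inv_init.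
  exact: pres Hm IH Hs.
move=> w g H; exact: (i_msgs I H).
Qed.
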